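(* Assume the standing setup below. For every $j$ with $2\le j\le n$, the number of nonzero entries of the change of basis matrix $C(\mathcal{B}_j,\mathcal{B}_{j-1})$ satisfies \[\nu(C(\mathcal{B}_j,\mathcal{B}_{j-1}))\le \Phi_X(G_j,G_{j-1}).\] Moreover, each column of $C(\mathcal{B}_j,\mathcal{B}_{j-1})$ has at most $K_X(G_j,G_{j-1})$ nonzero entries, so that $\nu(C(\mathcal{B}_j,\mathcal{B}_{j-1}))\le K_X(G_j,G_{j-1})\,|X|$.
   Context: For a finite group $G$, $\mathcal{R}(G)$ denotes a fixed complete set of pairwise inequivalent irreducible complex matrix representations of $G$. For a finite-dimensional $\mathbb{C}G$-module $M$ with ordered basis $\mathcal{B}$, $[g]_{\mathcal{B}}$ denotes the matrix of the action of $g$ with respect to $\mathcal{B}$; $\mathcal{B}$ is a symmetry adapted basis of $M$ with respect to $\mathcal{R}(G)$ if there is a fixed partition of the positions into consecutive blocks such that for every $g\in G$, $[g]_{\mathcal{B}}$ is block diagonal with respect to these blocks and each block equals $\rho(g)$ for some $\rho\in\mathcal{R}(G)$ depending only on the block. Standing setup: $G$ is a finite group acting on a finite set $X$; $\mathbb{C}X$ is the space of functions $X\to\mathbb{C}$ with $(g\cdot f)(x)=f(g^{-1}x)$, each $x\in X$ is identified with its indicator function, and the standard basis of $\mathbb{C}X$ is $X$ itself. For a subset $Y\subseteq X$ that is a union of orbits of a subgroup, $\mathbb{C}Y$ is regarded as a submodule of $\mathbb{C}X$. We are given a chain of subgroups $\{1\}=G_1<G_2<\cdots<G_n=G$ and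 sets $\mathcal{R}(G_1),\dots,\mathcal{R}(G_n)$ that are compatible with respect to $\mathbb{C}X$, meaning there is a basis of $\mathbb{C}X$ that is symmetry adapted with respect to $\mathcal{R}(G_i)$ (for $\mathbb{C}X$ restricted to $G_i$) for every $i$. For $1\le j\le n$, $\mathcal{B}_j$ is an orbital symmetry adapted basis with respect to $\mathcal{R}(G_1),\dots,\mathcal{R}(G_j)$: $\mathcal{B}_j$ is the disjoint union, over the $G_j$-orbits $Y\subseteq X$, of bases of $\mathbb{C}Y$, each of which is symmetry adapted with respect to $\mathcal{R}(G_i)$ for every $i\le j$; and $\mathcal{B}_1$ is the standard basis. For bases $\mathcal{B},\mathcal{B}'$ of a vector space $V$, $[v]_{\mathcal{B}}$ is the coordinate vector and $C(\mathcal{B},\mathcal{B}')$ is the matrix with $C(\mathcal{B},\mathcal{B}')[v]_{\mathcal{B}'}=[v]_{\mathcal{B}}$ for all $v$. For a matrix $A$, $\nu(A)$ is the number of nonzero entries of $A$. For subgroups $H\le K\le G$ with $K$ acting transitively on a finite set $Y$, write $\mathbb{C}Y\cong\kappa_1N_1\oplus\cdots\oplus\kappa_sN_s$ as $\mathbb{C}H$-modules where $N_1,\dots,N_s$ are a complete set of irreducible $\mathbb{C}H$-modules; set $K_Y(K,H)=\max\{\kappa_1,\dots,\kappa_s\}$ and $\Phi_Y(K,H)=\sum_{i=1}^s\kappa_i^2\dim N_i$. If $K$ acts on $X$ with orbits $X_1,\dots,X_t$, set $\Phi_X(K,H)=\sum_{i=1}^t\Phi_{X_i}(K,H)$ and $K_X(K,H)=\max_i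 K_{X_i}(K,H)$. *)

(* Defs.v *)
From HB Require Import structures.
From mathcomp Require Import all_boot all_order all_algebra all_fingroup all_solvable all_field all_character.
Set Implicit Arguments.
Unset Strict Implicit.
Unset Printing Implicit Defensive.
Import GRing.Theory Num.Theory.
Local Open Scope ring_scope.

Section Defs.
Variables (gT : finGroupType) (T : finType) (to : {action gT &-> T}).

(* Left action g.x := to x g^-1 (MathComp actions are right actions).
   Matrix of g on CX in the standard basis (columns = images of basis
   vectors, standard basis ordered by enum T):  g . delta_x = delta_{g.x}. *)
Definition permmx (g : gT) : 'M[algC]_#|T| :=
  \matrix_(i, j) ((to (enum_val i) g == enum_val j)%:R).

Definition repT (H : {group gT}) := {d : nat & mx_representation algC H d}.

Definition rep_at (H : {group gT}) (R : seq (repT H)) (i : 'I_(size R)) : repT H :=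
  tnth (in_tuple R) i.
Definition rdim (H : {group gT}) (R : seq (repT H)) (i : 'I_(size R)) : nat :=
  projT1 (rep_at i).
Definition rmat (H : {group gT}) (R : seq (repT H)) (g : gT) (i : 'I_(size R))
  : 'M[algC]_(rdim i) := projT2 (rep_at i) g.

Definition complete_irr_set (H : {group gT}) (R : seq (repT H)) : Prop :=
  [/\ forall i : 'I_(size R), mx_irreducible (projT2 (rep_at i)),
      forall i j : 'I_(size R), i != j ->
        ~ mx_rsim (projT2 (rep_at i)) (projT2 (rep_at j)) &
      forall d (rG : mx_representation algC H d), mx_irreducible rG ->
        exists i : 'I_(size R), mx_rsim rG (projT2 (rep_at i))].

Fixpoint bdiag (I : Type) (d : I -> nat) (A : forall i, 'M[algC]_(d i)) (s : seq I)
  : 'M[algC]_(sumn (map d s)) :=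
  match s return 'M[algC]_(sumn (map d s)) with
  | [::] => 0
  | i :: s' => block_mx (A i) 0 0 (@bdiag I d A s')
  end.

(* The columns of V (an ordered family of vectors of CX, in standard
   coordinates, spanning a CH-submodule) form a symmetry adapted family
   w.r.t. R: for every g in H the matrix [g]_V (characterized by
   permmx g *m V = V *m [g]_V) is block diagonal with blocks rho(g),
   rho in R, for a fixed block pattern s. *)
Definition sym_adapted (H : {group gT}) (R : seq (repT H)) m
    (V : 'M[algC]_(#|T|, m)) : Prop :=
  exists s : seq 'I_(size R), exists e : sumn (map (@rdim H R) s) = m,
    forall g, g \in H ->
      permmx g *m V = V *m castmx (e, e) (@bdiag _ (@rdim H R) (@rmat H R g) s).

(* CY as a subspace of CX (row space of the diagonal indicator matrix) *)
Definition CYmx (Y : {set T}) : 'M[algC]_#|T| :=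
  \matrix_(i, j) ((i == j) && (enum_val i \in Y))%:R.

Definition basis_of_CY (Y : {set T}) m (V : 'M[algC]_(#|T|, m)) : bool :=
  row_free V^T && (V^T == CYmx Y)%MS.

Definition supported_in (Y : {set T}) (v : 'cV[algC]_#|T|) : bool :=
  [forall i, (v i 0 != 0) ==> (enum_val i \in Y)].

Definition orbits (K : {group gT}) : {set {set T}} :=
  [set orbit to K x | x in [set: T]].

Definition cols_in (B : 'M[algC]_#|T|) (Y : {set T}) : seq 'I_#|T| :=
  [seq k <- enum 'I_#|T| | supported_in Y (col k B)].

Definition sub_basis (B : 'M[algC]_#|T|) (Y : {set T})
  : 'M[algC]_(#|T|, size (cols_in B Y)) :=
  mxsub id (fun i => tnth (in_tuple (cols_in B Y)) i) B.

Definition orbital_sab (Gs : nat -> {group gT}) (Rs : forall i, seq (repT (Gs i)))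
    (j : nat) (B : 'M[algC]_#|T|) : Prop :=
  [/\ B \in unitmx,
      forall k : 'I_#|T|, exists2 Y, Y \in orbits (Gs j) & supported_in Y (col k B) &
      forall Y, Y \in orbits (Gs j) ->
        basis_of_CY Y (sub_basis B Y) /\
        forall i, (1 <= i <= j)%N -> sym_adapted (Rs i) (sub_basis B Y)].

(* kap is the multiplicity vector of CY as a CH-module w.r.t. the complete set
   R of irreducibles:  CY ~= (+)_i kap_i R_i  (realized by a basis of CY in
   which H acts block diagonally with kap_i copies of R_i) *)
Definition is_mult (H : {group gT}) (R : seq (repT H)) (Y : {set T})
    (kap : 'I_(size R) -> nat) : Prop :=
  let s := flatten [seq nseq (kap i) i | i <- enum 'I_(size R)] in
  exists V : 'M[algC]_(#|T|, sumn (map (@rdim H R) s)),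
    basis_of_CY Y V /\
    forall h, h \in H -> permmx h *m V = V *m @bdiag _ (@rdim H R) (@rmat H R h) s.

Definition PhiX (K H : {group gT}) (R : seq (repT H))
    (kap : {set T} -> 'I_(size R) -> nat) : nat :=
  \sum_(Y in orbits K) \sum_(i < size R) (kap Y i) ^ 2 * rdim i.

Definition KX (K H : {group gT}) (R : seq (repT H))
    (kap : {set T} -> 'I_(size R) -> nat) : nat :=
  \max_(Y in orbits K) \max_(i < size R) kap Y i.

Definition nu m n (A : 'M[algC]_(m, n)) : nat :=
  #|[set ij : 'I_m * 'I_n | A ij.1 ij.2 != 0]|.

Definition col_nnz m n (A : 'M[algC]_(m, n)) (k : 'I_n) : nat :=
  #|[set i : 'I_m | A i k != 0]|.

(* C(B, B') with [v]_B = C(B,B') [v]_B' *)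
Definition chg (B B' : 'M[algC]_#|T|) : 'M[algC]_#|T| := invmx B *m B'.

End Defs.

(* Main.v *)
Require Import Defs.
From HB Require Import structures.
From mathcomp Require Import all_boot all_order all_algebra all_fingroup all_solvable all_field all_character.
From Stdlib Require Import IndefiniteDescription.
Import GRing.Theory Num.Theory.
Local Open Scope ring_scope.

Set Implicit Arguments.
Unset Strict Implicit.
Unset Printing Implicit Defensive.

Section Schur.
Variables (gT : finGroupType) (H : {group gT}).

Lemma schur2 d1 d2 (rho : mx_representation algC H d1)
  (sig : mx_representation algC H d2) (X : 'M[algC]_(d1, d2)) :
  mx_irreducible rho -> mx_irreducible sig ->
  (forall h, h \in H -> rho h *m X = X *m sig h) -> X != 0 ->
  row_free X /\ row_full X.
Proof.
move=> /mx_irrP [_ irr1] /mx_irrP [_ irr2] hX nzX; split.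
  rewrite -kermx_eq0; apply/negPn/negP => nzK.
  have modK : mxmodule rho (kermx X).
    apply/mxmoduleP => h Hh; apply/sub_kermxP.
    by rewrite -mulmxA hX // mulmxA (sub_kermxP (submx_refl _)) mul0mx.
  have := irr1 _ modK nzK; rewrite -sub1mx => /sub_kermxP.
  by rewrite mul1mx => X0; rewrite X0 eqxx in nzX.
rewrite /row_full -(genmxE X); apply: irr2; last by rewrite -mxrank_eq0 genmxE mxrank_eq0.
rewrite (eqmx_module _ (genmxE X)); apply/mxmoduleP => h Hh.
by rewrite -hX // submxMl.
Qed.

Lemma schur_scalar d (rho : mx_representation algC H d) (X : 'M[algC]_d) :
  mx_irreducible rho ->
  (forall h, h \in H -> rho h *m X = X *m rho h) -> exists c, X = c%:M.
Proof.
move=> irr hX; have /mx_irrP [dpos _] := irr.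
have : size (char_poly X) != 1%N.
  by rewrite size_char_poly; case: d {rho irr hX X} dpos.
case/closed_rootP => c; rewrite -eigenvalue_root_char => /eigenvalueP [v vX nzv].
exists c; apply/eqP; rewrite -subr_eq0; apply/negP => nz.
have [|fr _] := schur2 irr irr (X := X - c%:M) _ (introN idP nz).
  by move=> h Hh; rewrite mulmxBl mulmxBr hX // scalar_mxC.
have : v *m (X - c%:M) = 0 by rewrite mulmxBr vX mul_mx_scalar subrr.
rewrite -(mul0mx _ (X - c%:M)) => /(row_free_inj fr) v0; by rewrite v0 eqxx in nzv.
Qed.
End Schur.

Section Pat.
Variables (gT : finGroupType) (H : {group gT}) (R : seq (repT H)).
Local Notation rd := (@rdim _ H R).
Local Notation RM := (@rmat _ H R).

Fixpoint lab (s : seq 'I_(size R)) (u : nat) : option ('I_(size R) * nat) :=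
  match s with
  | [::] => None
  | i :: s' => if (u < rd i)%N then Some (i, u) else lab s' (u - rd i)
  end.

Lemma lab_sum (s : seq 'I_(size R)) (g : option ('I_(size R) * nat) -> nat) :
  (\sum_(u < sumn (map rd s)) g (lab s u) =
   \sum_(i <- s) \sum_(q < rd i) g (Some (i, val q)))%N.
Proof.
elim: s => [|i s IH]; first by rewrite big_nil big_ord0.
rewrite big_cons -IH /= big_split_ord /=; congr (_ + _)%N.
  by apply: eq_bigr => u _; rewrite /= ltn_ord.
by apply: eq_bigr => u _; rewrite /= ltnNge leq_addr /= addKn.
Qed.

Lemma lab_lt s u a q : lab s u = Some (a, q) -> (q < rd a)%N.
Proof.
elim: s u => [|i s IH] u //=; case: ifP => [lt [<- <-] // | _]; exact: IH.
Qed.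

Lemma lab_some s (u : 'I_(sumn (map rd s))) : exists a q, lab s u = Some (a, q).
Proof.
elim: s u => [|i s IH] u; first by case: u.
case: (splitP u) => [u1 e | u2 e] /=; rewrite e.
  by exists i, u1; rewrite ltn_ord.
by rewrite ltnNge leq_addr /= addKn; apply: IH.
Qed.


Lemma lab_extract m s (P : gT -> 'M[algC]_m) (M : 'M[algC]_(m, sumn (map rd s))) :
  (forall h, h \in H -> P h *m M = M *m bdiag (RM h) s) ->
  forall (u : 'I_(sumn (map rd s))) a q, lab s u = Some (a, q) ->
  exists (W : 'M[algC]_(m, rd a)) (S : 'M[algC]_(sumn (map rd s), rd a)),
    [/\ W = M *m S, (forall h, h \in H -> P h *m W = W *m RM h a) &
    exists2 q' : 'I_(rd a), val q' = q & col q' W = col u M].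
Proof.
elim: s M => [|i s IH] M hM u a q; first by case: u.
rewrite -[M]hsubmxK in hM *.
have hM1 : forall h, h \in H -> P h *m lsubmx M = lsubmx M *m RM h i.
  move=> h Hh; have := hM h Hh; rewrite /= mul_mx_row mul_row_block.
  by case/eq_row_mx; rewrite !mulmx0 addr0.
have hM2 : forall h, h \in H -> P h *m rsubmx M = rsubmx M *m bdiag (RM h) s.
  move=> h Hh; have := hM h Hh; rewrite /= mul_mx_row mul_row_block.
  by case/eq_row_mx => _; rewrite !mulmx0 add0r.
case: (splitP u) => [u1 e | u2 e] /=; rewrite e.
  have -> : u = lshift _ u1 by apply/val_inj.
  rewrite ltn_ord => -[<- <-].
  exists (lsubmx M), (col_mx 1%:M 0); split => //.
    by rewrite mul_row_col mulmx1 mulmx0 addr0.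
  by exists u1 => //; apply/colP => x; rewrite [LHS]mxE [RHS]mxE row_mxEl.
have -> : u = rshift _ u2 by apply/val_inj.
rewrite ltnNge leq_addr /= addKn => hl.
have [W [S [eW hW [q' eq' cq]]]] := IH _ hM2 u2 a q hl.
exists W, (col_mx 0 S); split => //.
  by rewrite mul_row_col mulmx0 add0r.
by exists q' => //; rewrite cq; apply/colP => x; rewrite [LHS]mxE [RHS]mxE row_mxEr.
Qed.

Lemma bdiag_tr h s : \tr (bdiag (RM h) s) = \sum_(i <- s) \tr (RM h i).
Proof.
elim: s => [|i s IH]; first by rewrite big_nil /= mxtrace0.
by rewrite big_cons /= mxtrace_block IH.
Qed.

Hypothesis hirr : forall i : 'I_(size R), mx_irreducible (projT2 (rep_at i)).
Hypothesis hineq : forall i j : 'I_(size R), i != j ->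
        ~ mx_rsim (projT2 (rep_at i)) (projT2 (rep_at j)).

Lemma lab_intertw s a (N : 'M[algC]_(sumn (map rd s), rd a)) :
  (forall h, h \in H -> bdiag (RM h) s *m N = N *m RM h a) ->
  forall (u : 'I_(sumn (map rd s))) (q : 'I_(rd a)), N u q != 0 ->
  lab s u = Some (a, val q).
Proof.
elim: s N => [|i s IH] N hN u q; first by case: u.
rewrite -[N]vsubmxK in hN *.
have hN1 : forall h, h \in H -> RM h i *m usubmx N = usubmx N *m RM h a.
  move=> h Hh; have := hN h Hh; rewrite /= mul_block_col mul_col_mx.
  by case/eq_col_mx; rewrite !mul0mx addr0.
have hN2 : forall h, h \in H -> bdiag (RM h) s *m dsubmx N = dsubmx N *m RM h a.
  move=> h Hh; have := hN h Hh; rewrite /= mul_block_col mul_col_mx.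
  by case/eq_col_mx; rewrite !mul0mx add0r.
case: (splitP u) => [u1 e | u2 e] /=; rewrite e.
  have -> : u = lshift _ u1 by apply/val_inj.
  rewrite col_mxEu ltn_ord => nz.
  have nzN : usubmx N != 0 by apply: contraNneq nz => ->; rewrite mxE.
  have eia : i = a.
    apply/eqP; apply/negPn/negP => /hineq; apply.
    have [fr fl] := schur2 (hirr i) (hirr a) hN1 nzN.
    have ed : rd i = rd a by move: fr fl; rewrite /row_free /row_full => /eqP e1 /eqP e2; exact: etrans (esym e1) e2.
    by exists (usubmx N).
  subst a; have [c hc] := schur_scalar (hirr i) hN1.
  move: nz; rewrite hc mxE; case: (u1 =P q) => [-> | ]; first by [].
  by rewrite mulr0n eqxx.
have -> : u = rshift _ u2 by apply/val_inj.
rewrite col_mxEd ltnNge leq_addr /= addKn => nz; exact: IH hN2 u2 q nz.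
Qed.

Lemma cast_tr k m (e : k = m) (A : 'M[algC]_k) : \tr (castmx (e, e) A) = \tr A.
Proof. by case: m / e; rewrite castmx_id. Qed.

Lemma cfRepr_dot (i b : 'I_(size R)) :
  '[cfRepr (projT2 (rep_at i)), cfRepr (projT2 (rep_at b))] = (i == b)%:R.
Proof.
have irrI (j : 'I_(size R)) : cfRepr (projT2 (rep_at j)) \in irr H.
  by apply/irr_reprP; exists (Representation (projT2 (rep_at j))); [exact: hirr|].
have /irrP [i' ei] := irrI i; have /irrP [b' eb] := irrI b.
rewrite ei eb cfdot_irr; congr (_%:R).
case: (i' =P b') => [e|ne]; case: (i =P b) => [e'|ne'] //.
  case: ne'; apply/eqP; apply/negPn/negP => /hineq; apply; apply: cfRepr_inj.
  by rewrite ei eb e.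
by case: ne; apply: irr_inj; rewrite -ei -eb e'.
Qed.

Lemma count_uniq p m1 m2 (P : gT -> 'M[algC]_p) (V1 : 'M[algC]_(p, m1))
    (V2 : 'M[algC]_(p, m2)) s1 s2 (e1 : sumn (map rd s1) = m1)
    (e2 : sumn (map rd s2) = m2) :
  row_free V1^T -> row_free V2^T -> (V1^T == V2^T)%MS ->
  (forall h, h \in H -> P h *m V1 = V1 *m castmx (e1, e1) (bdiag (RM h) s1)) ->
  (forall h, h \in H -> P h *m V2 = V2 *m castmx (e2, e2) (bdiag (RM h) s2)) ->
  forall b, count_mem b s1 = count_mem b s2.
Proof.
move=> f1 f2 /andP [s12 s21] h1 h2 b.
have [Q1 eQ1] := submxP s21; have [Q2 eQ2] := submxP s12.
have eV2 : V2 = V1 *m Q1^T by rewrite -[V2]trmxK eQ1 trmx_mul trmxK.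
have eV1 : V1 = V2 *m Q2^T by rewrite -[V1]trmxK eQ2 trmx_mul trmxK.
have canc1 m (X Y : 'M[algC]_(m1, m)) : V1 *m X = V1 *m Y -> X = Y.
  move=> eXY; apply: trmx_inj; apply: (row_free_inj f1).
  by rewrite -!trmx_mul eXY.
have canc2 m (X Y : 'M[algC]_(m2, m)) : V2 *m X = V2 *m Y -> X = Y.
  move=> eXY; apply: trmx_inj; apply: (row_free_inj f2).
  by rewrite -!trmx_mul eXY.
have QQ1 : Q1^T *m Q2^T = 1%:M by apply: canc1; rewrite mulmxA -eV2 -eV1 mulmx1.
have QQ2 : Q2^T *m Q1^T = 1%:M by apply: canc2; rewrite mulmxA -eV1 -eV2 mulmx1.
have htr h : h \in H -> \sum_(i <- s1) \tr (RM h i) = \sum_(i <- s2) \tr (RM h i).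
  move=> Hh; rewrite -!bdiag_tr -(cast_tr e1) -(cast_tr e2).
  set A1 := castmx _ _; set A2 := castmx _ _.
  have eA : A1 *m Q1^T = Q1^T *m A2.
    apply: canc1; rewrite mulmxA -h1 // -mulmxA -eV2 h2 // eV2 mulmxA.
    by [].
  have -> : A2 = Q2^T *m A1 *m Q1^T.
    by rewrite -mulmxA eA mulmxA QQ2 mul1mx.
  by rewrite mxtrace_mulC mulmxA QQ1 mul1mx.
have ecf : \sum_(i <- s1) cfRepr (projT2 (rep_at i)) =
           \sum_(i <- s2) cfRepr (projT2 (rep_at i)).
  apply: cfun_inP => x Hx; rewrite !sum_cfunE.
  have e := htr x Hx; rewrite /rmat in e.
  rewrite (eq_bigr (fun i => \tr (projT2 (rep_at i) x))); last first.
    by move=> i _; rewrite cfunE Hx mulr1n.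
  rewrite e; apply: eq_bigr => i _; by rewrite cfunE Hx mulr1n.
have cnt s : '[\sum_(i <- s) cfRepr (projT2 (rep_at i)), cfRepr (projT2 (rep_at b))]
    = (count_mem b s)%:R.
  elim: s => [|i s IH]; first by rewrite big_nil cfdot0l.
  by rewrite big_cons cfdotDl IH cfRepr_dot /= natrD.
by apply/eqP; rewrite -(eqr_nat algC) -!cnt ecf.
Qed.

End Pat.

Lemma colM m n p (A : 'M[algC]_(m, n)) (B : 'M[algC]_(n, p)) j :
  col j (A *m B) = A *m col j B.
Proof. by apply/colP => i; rewrite !mxE; apply: eq_bigr => k _; rewrite !mxE. Qed.

Lemma unit_col_nz n (B : 'M[algC]_n) k : B \in unitmx -> col k B != 0.
Proof.
move=> uB; apply/eqP => ck.
have : col k (invmx B *m B) = 0 by rewrite colM ck mulmx0.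
rewrite mulVmx // => /colP /(_ k); rewrite !mxE eqxx /= => /eqP.
by rewrite oner_eq0.
Qed.

Section Orb.
Variables (gT : finGroupType) (T : finType) (to : {action gT &-> T}).
Local Notation nT := #|T|.

Lemma orbits_eq (L : {group gT}) Y1 Y2 x :
  Y1 \in orbits to L -> Y2 \in orbits to L -> x \in Y1 -> x \in Y2 -> Y1 = Y2.
Proof.
move=> /imsetP [y1 _ ->] /imsetP [y2 _ ->] h1 h2.
by rewrite -(orbit_eqP h1) -(orbit_eqP h2).
Qed.

Lemma supp_nz (v : 'cV[algC]_nT) : v != 0 -> exists i, v i 0 != 0.
Proof.
move=> nz; apply/existsP; apply: contraR nz => /existsPn h.
apply/eqP/colP => i; rewrite mxE; apply/eqP; move: (h i); by rewrite negbK.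
Qed.

Lemma supp_eq (L : {group gT}) Y1 Y2 (v : 'cV[algC]_nT) :
  Y1 \in orbits to L -> Y2 \in orbits to L -> supported_in Y1 v ->
  supported_in Y2 v -> v != 0 -> Y1 = Y2.
Proof.
move=> o1 o2 /forallP s1 /forallP s2 /supp_nz [i nz].
apply: (orbits_eq o1 o2 (x := enum_val i)).
  exact: (implyP (s1 i) nz).
exact: (implyP (s2 i) nz).
Qed.

Definition oY (L : {group gT}) (B : 'M[algC]_nT) k :=
  odflt set0 [pick Y in orbits to L | supported_in Y (col k B)].

Lemma oY_spec (L : {group gT}) (B : 'M[algC]_nT) k :
  (exists2 Y, Y \in orbits to L & supported_in Y (col k B)) ->
  oY L B k \in orbits to L /\ supported_in (oY L B k) (col k B).
Proof.
move=> [Y oYY sY]; rewrite /oY; case: pickP => [Y' /andP [] //|].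
by move/(_ Y); rewrite oYY sY.
Qed.

Lemma mem_cols (B : 'M[algC]_nT) Y k :
  (k \in cols_in B Y) = supported_in Y (col k B).
Proof. by rewrite mem_filter mem_enum andbT. Qed.

Lemma cols_oY (L : {group gT}) (B : 'M[algC]_nT) Y k :
  B \in unitmx -> Y \in orbits to L ->
  (exists2 Y, Y \in orbits to L & supported_in Y (col k B)) ->
  (k \in cols_in B Y) = (oY L B k == Y).
Proof.
move=> uB oYY ex; have [o1 s1] := oY_spec ex; rewrite mem_cols.
apply/idP/eqP => [sY | <- //].
exact: (supp_eq o1 oYY s1 sY (unit_col_nz k uB)).
Qed.

Lemma cols_uniq (B : 'M[algC]_nT) Y : uniq (cols_in B Y).
Proof. exact/filter_uniq/enum_uniq. Qed.

Lemma sub_basis_col (B : 'M[algC]_nT) Y (r : 'I_(size (cols_in B Y))) :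
  col r (sub_basis B Y) = col (tnth (in_tuple (cols_in B Y)) r) B.
Proof. by apply/colP => i; rewrite !mxE. Qed.

Lemma CYmx_sub (Y1 Y2 : {set T}) : Y1 \subset Y2 -> (CYmx Y1 <= CYmx Y2)%MS.
Proof.
move=> sub; have -> : CYmx Y1 = CYmx Y1 *m CYmx Y2; last exact: submxMl.
apply/matrixP => i j; rewrite [RHS]mxE (bigD1 j) //= big1 ?addr0.
  rewrite !mxE eqxx /=; case: (i =P j) => [->|] /=; last by rewrite !mul0r.
  by case: (boolP (enum_val j \in Y1)) => h; rewrite ?mul0r // (subsetP sub _ h) mul1r.
by move=> k kj; rewrite !mxE (negbTE kj) /= mulr0.
Qed.
End Orb.

Section Cast.
Variables (gT : finGroupType) (H : {group gT}) (R : seq (repT H)).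
Local Notation rd := (@rdim _ H R).
Lemma adapt_cast p m s (e : sumn (map rd s) = m) (P : gT -> 'M[algC]_p)
    (V : 'M[algC]_(p, m)) :
  (forall g, g \in H -> P g *m V = V *m castmx (e, e) (bdiag (@rmat _ H R g) s)) ->
  exists M : 'M[algC]_(p, sumn (map rd s)),
    [/\ forall g, g \in H -> P g *m M = M *m bdiag (@rmat _ H R g) s,
        (M^T == V^T)%MS, row_free M^T = row_free V^T &
        forall u, col u M = col (cast_ord e u) V].
Proof.
case: m / e V => V hV; exists V; split.
- by move=> g Hg; rewrite hV // castmx_id.
- by apply/andP; split.
- by [].
- by move=> u; rewrite cast_ord_id.
Qed.
End Cast.

Lemma card_supp_le n (C : 'M[algC]_n) (P J : {set 'I_n}) : C \in unitmx ->
  (forall k l, l \in P -> C k l != 0 -> k \in J) -> (#|P| <= #|J|)%N.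
Proof.
move=> uC hCJ.
pose SP : 'M[algC]_(n, #|P|) := \matrix_(k, r) ((k == enum_val r)%:R).
pose SJ : 'M[algC]_(n, #|J|) := \matrix_(k, r) ((k == enum_val r)%:R).
have selR m (X : 'M[algC]_(m, n)) k r : (X *m SP) k r = X k (enum_val r).
  rewrite mxE (bigD1 (enum_val r)) //= big1 ?addr0; first by rewrite mxE eqxx mulr1.
  by move=> k1 nk; rewrite mxE (negbTE nk) mulr0.
have selL m (X : 'M[algC]_(n, m)) r c : (SJ^T *m X) r c = X (enum_val r) c.
  rewrite mxE (bigD1 (enum_val r)) //= big1 ?addr0; first by rewrite !mxE eqxx mul1r.
  by move=> k1 nk; rewrite !mxE (negbTE nk) mul0r.
have eP : SP^T *m SP = 1%:M.
  apply/matrixP => r r'; rewrite selR !mxE (inj_eq enum_val_inj).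
  by rewrite eq_sym.
have eJ : C *m SP = SJ *m (SJ^T *m (C *m SP)).
  apply/matrixP => k r; rewrite [RHS]mxE.
  case: (boolP (k \in J)) => kJ.
    rewrite (bigD1 (enum_rank_in kJ k)) //= big1 ?addr0.
      by rewrite selL !mxE enum_rankK_in // eqxx mul1r.
    move=> r1 nr1; rewrite !mxE; case: (k =P enum_val r1) => [ek|]; last by rewrite mul0r.
    have e1 := enum_valK_in kJ r1; rewrite -ek in e1; by rewrite e1 eqxx in nr1.
  rewrite big1; last first.
    move=> r1 _; rewrite !mxE; case: (k =P enum_val r1) => [ek|]; last by rewrite mul0r.
    by move: kJ; rewrite ek enum_valP.
  rewrite selR; apply/eqP; apply/negPn/negP => nz.
  by move: kJ; rewrite (hCJ _ _ (enum_valP r) nz).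
have r1 : (#|P| <= \rank SP)%N.
  by have := mxrankM_maxr SP^T SP; rewrite eP mxrank1.
have r2 : (\rank SP <= \rank (C *m SP))%N.
  by have := mxrankM_maxr (invmx C) (C *m SP); rewrite mulKmx.
have r3 : (\rank (C *m SP) <= #|J|)%N.
  by rewrite eJ (leq_trans (mxrankM_maxl _ _)) // rank_leq_col.
exact: leq_trans r1 (leq_trans r2 r3).
Qed.

Lemma sum_count (N : nat) (s : seq 'I_N) (F : 'I_N -> nat) :
  (\sum_(i <- s) F i = \sum_(a < N) count_mem a s * F a)%N.
Proof.
elim: s => [|x s IH]; first by rewrite big_nil big1.
rewrite big_cons IH /= [RHS](eq_bigr (fun a => (x == a) * F a + count_mem a s * F a)%N).
  rewrite big_split /=; congr (_ + _)%N.
  rewrite (bigD1 x) //= eqxx mul1n big1 ?addn0 // => a ax.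
  by rewrite eq_sym (negbTE ax).
by move=> a _; rewrite mulnDl.
Qed.

Lemma count_flat (N : nat) (kap : 'I_N -> nat) a :
  count_mem a (flatten [seq nseq (kap i) i | i <- enum 'I_N]) = kap a.
Proof.
rewrite count_flatten -map_comp sumnE big_map /=.
rewrite (eq_bigr (fun i => (i == a) * kap i)%N); last first.
  by move=> i _; rewrite /= count_nseq /= eq_sym.
rewrite big_enum (bigD1 a) //= eqxx mul1n big1 ?addn0 // => i ia.
by rewrite (negbTE ia).
Qed.

Section Main.
Variables (gT : finGroupType) (T : finType) (to : {action gT &-> T}).
Variables (H K : {group gT}) (R : seq (repT H)) (Bj Bp : 'M[algC]_#|T|).
Local Notation rd := (@rdim _ H R).
Hypothesis hHK : H \subset K.
Hypothesis hirr : forall i : 'I_(size R), mx_irreducible (projT2 (rep_at i)).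
Hypothesis hineq : forall i j : 'I_(size R), i != j ->
        ~ mx_rsim (projT2 (rep_at i)) (projT2 (rep_at j)).
Hypothesis uBj : Bj \in unitmx.
Hypothesis uBp : Bp \in unitmx.
Hypothesis covj : forall k, exists2 Y, Y \in orbits to K & supported_in Y (col k Bj).
Hypothesis covp : forall l, exists2 Y, Y \in orbits to H & supported_in Y (col l Bp).
Hypothesis basj : forall Y, Y \in orbits to K -> basis_of_CY Y (sub_basis Bj Y).
Hypothesis basp : forall Y, Y \in orbits to H -> basis_of_CY Y (sub_basis Bp Y).
Variables patj patp : {set T} -> seq 'I_(size R).
Hypothesis hpj : forall Y, Y \in orbits to K ->
  exists e : sumn (map rd (patj Y)) = size (cols_in Bj Y), forall g, g \in H ->
    permmx to g *m sub_basis Bj Y = sub_basis Bj Y *m castmx (e, e) (bdiag (@rmat _ H R g) (patj Y)).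
Hypothesis hpp : forall Y, Y \in orbits to H ->
  exists e : sumn (map rd (patp Y)) = size (cols_in Bp Y), forall g, g \in H ->
    permmx to g *m sub_basis Bp Y = sub_basis Bp Y *m castmx (e, e) (bdiag (@rmat _ H R g) (patp Y)).

Definition typj k := (oY to K Bj k,
  lab (patj (oY to K Bj k)) (index k (cols_in Bj (oY to K Bj k)))).
Definition typp l := (oY to K Bp l,
  lab (patp (oY to H Bp l)) (index l (cols_in Bp (oY to H Bp l)))).

Lemma covKp l : (exists2 Y, Y \in orbits to K & supported_in Y (col l Bp)) /\
  oY to H Bp l \subset oY to K Bp l.
Proof.
have [oYp sYp] := oY_spec (covp l).
have [i nz] := supp_nz (unit_col_nz l uBp).
set x := enum_val i.
have xY' : x \in oY to H Bp l by exact: (implyP (forallP sYp i) nz).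
have eY' : oY to H Bp l = orbit to H x.
  by move: oYp xY' => /imsetP [y _ ->] /orbit_eqP ->.
have sub : oY to H Bp l \subset orbit to K x by rewrite eY'; exact: imsetS.
have oK : orbit to K x \in orbits to K by apply: imset_f.
have sK : supported_in (orbit to K x) (col l Bp).
  apply/forallP => i'; apply/implyP => nz'.
  exact: (subsetP sub) (implyP (forallP sYp i') nz').
have ex : exists2 Y, Y \in orbits to K & supported_in Y (col l Bp) by exists (orbit to K x).
split => //; have [oK' sK'] := oY_spec ex.
by rewrite (supp_eq oK' oK sK' sK (unit_col_nz l uBp)).
Qed.

Lemma key l k : (invmx Bj *m Bp) k l != 0 -> typj k = typp l.
Proof.
have [oYp sYp] := oY_spec (covp l).
have [exK subYY] := covKp l.
have [oYK sYK] := oY_spec exK.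
rewrite /typp.
move: oYp sYp subYY oYK sYK; set Y' := oY to H Bp l; set Y := oY to K Bp l.
move=> oYp sYp subYY oYK sYK.
have lin : l \in cols_in Bp Y' by rewrite mem_cols.
have rlt : (index l (cols_in Bp Y') < size (cols_in Bp Y'))%N by rewrite index_mem.
have [e' he'] := hpp oYp.
have [M' [hM' eM' fM' cM']] := adapt_cast he'.
pose u' := cast_ord (esym e') (Ordinal rlt).
have [a [q hlab]] := lab_some u'.
have [W [S [eW hW [q' eq' cW]]]] := lab_extract hM' hlab.
have cWl : col q' W = col l Bp.
  rewrite cW cM' cast_ordKV sub_basis_col; congr col.
  by apply/val_inj; rewrite /= (tnth_nth l) /= nth_index.
have [fj ej] := andP (basj oYK).
have [fp ep] := andP (basp oYp).
have WY : (W^T <= CYmx Y)%MS.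
  rewrite eW trmx_mul (submx_trans (submxMl _ _)) //.
  rewrite (submx_trans (proj1 (andP eM'))) //.
  rewrite (submx_trans (proj1 (andP ep))) //; exact: CYmx_sub.
have [e he] := hpj oYK.
have [Mj [hMj eMj fMj cMj]] := adapt_cast he.
have WMj : (W^T <= Mj^T)%MS.
  rewrite (submx_trans WY) // (submx_trans (proj2 (andP ej))) //.
  exact: (proj2 (andP eMj)).
have [N' eN'] := submxP WMj.
have eWN : W = Mj *m N'^T by rewrite -[W]trmxK eN' trmx_mul trmxK.
have frMj : row_free Mj^T by rewrite fMj.
have canc m (X Y0 : 'M[algC]_(sumn (map rd (patj Y)), m)) : Mj *m X = Mj *m Y0 -> X = Y0.
  move=> eXY; apply: trmx_inj; apply: (row_free_inj frMj).
  by rewrite -!trmx_mul eXY.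
have hN : forall h, h \in H ->
    bdiag (@rmat _ H R h) (patj Y) *m N'^T = N'^T *m @rmat _ H R h a.
  move=> h Hh; apply: canc; rewrite mulmxA -hMj // -mulmxA -eWN hW // eWN.
  by rewrite mulmxA.
pose t (u : 'I_(sumn (map rd (patj Y)))) :=
  tnth (in_tuple (cols_in Bj Y)) (cast_ord e u).
pose Sel : 'M[algC]_(#|T|, sumn (map rd (patj Y))) := \matrix_(k0, u) ((k0 == t u)%:R).
have eMS : Mj = Bj *m Sel.
  apply/matrixP => i u; rewrite [RHS]mxE (bigD1 (t u)) //= big1 ?addr0.
    rewrite !mxE eqxx mulr1.
    have := congr1 (fun v : 'cV[algC]_#|T| => v i 0) (cMj u); rewrite sub_basis_col !mxE => ->.
    by [].
  by move=> k0 nk; rewrite !mxE (negbTE nk) mulr0.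
have eC : col l (invmx Bj *m Bp) = Sel *m col q' N'^T.
  by rewrite colM -cWl eWN colM eMS -!mulmxA mulKmx.
move=> nz; have : (Sel *m col q' N'^T) k 0 != 0.
  by rewrite -eC mxE.
rewrite mxE => /eqP nzs.
have [u nzu] : exists u, Sel k u * col q' N'^T u 0 != 0.
  case: (pickP (fun u => Sel k u * col q' N'^T u 0 != 0)) => [u hu|hz]; first by exists u.
  case: nzs; apply: big1 => u _; by move: (hz u) => /negbFE/eqP.
have ku : k = t u.
  by move: nzu; rewrite !mxE; case: (k =P t u) => // _; rewrite mul0r eqxx.
have nzN : N'^T u q' != 0 by move: nzu; rewrite !mxE mulf_eq0 negb_or => /andP [].
have hl := lab_intertw hirr hineq hN nzN.
have kin : k \in cols_in Bj Y by rewrite ku mem_tnth.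
have eYk : oY to K Bj k = Y by apply/eqP; rewrite -(cols_oY uBj oYK (covj k)).
rewrite /typj eYk; congr pair.
have -> : index k (cols_in Bj Y) = u.
  rewrite ku /t (tnth_nth k) index_uniq ?cols_uniq //.
by rewrite hl eq' -hlab.
Qed.


Lemma card_sum (I : finType) (P : pred I) : #|[set k | P k]| = (\sum_k (P k : nat))%N.
Proof.
rewrite cardsE -sum1_card big_mkcond /=; apply: eq_bigr => k _.
by rewrite unfold_in; case: (P k).
Qed.

Lemma sumY Y (f : option ('I_(size R) * nat) -> nat) : Y \in orbits to K ->
  (\sum_(k | oY to K Bj k == Y) f (lab (patj Y) (index k (cols_in Bj Y))) =
   \sum_(i <- patj Y) \sum_(q < rd i) f (Some (i, val q)))%N.
Proof.
move=> oYY; rewrite -lab_sum.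
rewrite (eq_bigl (fun k => k \in cols_in Bj Y)); last first.
  by move=> k; rewrite /= (cols_oY uBj oYY (covj k)).
rewrite -big_uniq ?cols_uniq // big_tnth.
have [e _] := hpj oYY.
rewrite (eq_bigr (fun i : 'I_(size (cols_in Bj Y)) => f (lab (patj Y) i))); last first.
  by move=> i _; rewrite (tnth_nth (tnth (in_tuple (cols_in Bj Y)) i)) index_uniq ?cols_uniq.
by move: e; rewrite /= => ->.
Qed.


Variable kap : {set T} -> 'I_(size R) -> nat.
Hypothesis hkap : forall Y, Y \in orbits to K -> is_mult to Y (kap Y).

Lemma count_kap Y a : Y \in orbits to K -> count_mem a (patj Y) = kap Y a.
Proof.
move=> oYY; have [V [bV hV]] := hkap oYY.
have [e he] := hpj oYY.
have [f1 e1] := andP (basj oYY); have [f2 e2] := andP bV.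
rewrite -(count_flat (kap Y) a).
apply: (count_uniq hirr hineq (e2 := erefl) f1 f2 _ he).
  apply/andP; split.
    by rewrite (submx_trans (proj1 (andP e1))) // (proj2 (andP e2)).
  by rewrite (submx_trans (proj1 (andP e2))) // (proj2 (andP e1)).
by move=> h Hh; rewrite castmx_id hV.
Qed.

Definition gY Y (o : option ('I_(size R) * nat)) :=
  match o with Some (a, _) => kap Y a | None => 0%N end.
Definition kv k := gY (oY to K Bj k) (typj k).2.

Lemma typj_some k : exists a q, (typj k).2 = Some (a, q) /\ (q < rd a)%N.
Proof.
have [oYk _] := oY_spec (covj k).
have kin : k \in cols_in Bj (oY to K Bj k) by rewrite (cols_oY uBj oYk (covj k)).
have [e _] := hpj oYk.
have lt : (index k (cols_in Bj (oY to K Bj k)) < sumn (map rd (patj (oY to K Bj k))))%N.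
  by rewrite e index_mem.
have [a [q hl]] := lab_some (Ordinal lt).
by exists a, q; split => //; exact: lab_lt hl.
Qed.

Lemma cntJ_typ k : #|[set k' | typj k' == typj k]| = kv k.
Proof.
have [oYk _] := oY_spec (covj k).
have [a [q [hl lt]]] := typj_some k.
rewrite /kv hl /= card_sum.
set Y := oY to K Bj k.
have -> : typj k = (Y, Some (a, q)) by rewrite -hl.
rewrite (eq_bigr (fun k' => if oY to K Bj k' == Y then
    (lab (patj Y) (index k' (cols_in Bj Y)) == Some (a, q) : nat) else 0%N)); last first.
  move=> k' _; rewrite /typj xpair_eqE; case: (oY to K Bj k' =P Y) => [->|] //=.
rewrite -big_mkcond (sumY (fun o => (o == Some (a, q) : nat))) //.
rewrite -(count_kap a oYk) sum_count (bigD1 a) //=.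
rewrite [X in (_ + X)%N]big1 ?addn0; last first.
  move=> i ia; rewrite big1 ?muln0 // => q' _; apply/eqP; rewrite eqb0.
  by apply: contra ia => /eqP [eia _]; apply/eqP.
rewrite (bigD1 (Ordinal lt)) //= eqxx big1 ?addn0 ?muln1 //.
move=> q' nq; apply/eqP; rewrite eqb0; apply: contra nq => /eqP [eq].
by apply/eqP/val_inj.
Qed.


Lemma kv_le k : (kv k <= KX to K kap)%N.
Proof.
have [oYk _] := oY_spec (covj k); have [a [q [hl _]]] := typj_some k.
rewrite /kv hl /= /KX.
apply: (bigmax_sup (oY to K Bj k)) => //.
exact: (bigmax_sup a).
Qed.

Lemma nu_sum m n (A : 'M[algC]_(m, n)) : nu A = (\sum_l col_nnz A l)%N.
Proof.
rewrite /nu card_sum /col_nnz.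
rewrite (eq_bigr (fun l => \sum_k (A k l != 0%R : nat))%N); last by move=> l _; rewrite card_sum.
rewrite exchange_big /=.
by rewrite (pair_big xpredT xpredT (fun k l => (A k l != 0%R : nat))).
Qed.

Let C := invmx Bj *m Bp.
Lemma uC : C \in unitmx.
Proof. by rewrite unitmx_mul unitmx_inv uBj. Qed.

Lemma col_le l : (col_nnz C l <= #|[set k | typj k == typp l]|)%N.
Proof.
apply: subset_leq_card; apply/subsetP => k; rewrite !inE => nz.
by rewrite (key nz).
Qed.

Lemma colbound l : (col_nnz C l <= KX to K kap)%N.
Proof.
have [k0 nz0] := supp_nz (unit_col_nz l uC).
rewrite mxE in nz0.
apply: leq_trans (col_le l) _; rewrite -(key nz0) cntJ_typ; exact: kv_le.
Qed.

Lemma sum_kv : (\sum_k kv k = PhiX to K kap)%N.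
Proof.
rewrite (partition_big (oY to K Bj) (mem (orbits to K))) /=; last first.
  by move=> k _; have [] := oY_spec (covj k).
rewrite /PhiX; apply: eq_bigr => Y oYY.
rewrite (eq_bigr (fun k => gY Y (lab (patj Y) (index k (cols_in Bj Y))))); last first.
  by move=> k /eqP ek; rewrite /kv /typj /= ek.
rewrite (sumY (gY Y)) //.
rewrite (eq_bigr (fun i => rd i * kap Y i)%N); last first.
  by move=> i _; rewrite /= sum_nat_const card_ord.
rewrite sum_count; apply: eq_bigr => a _.
by rewrite (count_kap a oYY) expnS expn1 mulnCA [RHS]mulnC.
Qed.

Lemma main3 :
  [/\ (nu C <= PhiX to K kap)%N,
      (forall k, col_nnz C k <= KX to K kap)%N &
      (nu C <= KX to K kap * #|T|)%N].
Proof.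
split; first last.
- have hs : (\sum_l col_nnz C l <= \sum_(l < #|T|) KX to K kap)%N.
    by apply: leq_sum => l _; exact: colbound.
  rewrite nu_sum; apply: leq_trans hs _.
  by rewrite sum_nat_const card_ord mulnC.
- exact: colbound.
rewrite nu_sum -sum_kv.
have hs : (\sum_l col_nnz C l <= \sum_l #|[set k | typj k == typp l]|)%N.
  by apply: leq_sum => l _; exact: col_le.
apply: leq_trans hs _.
rewrite (eq_bigr (fun l => \sum_k (typj k == typp l : nat))%N); last by move=> l _; rewrite card_sum.
rewrite exchange_big /=; apply: leq_sum => k _.
rewrite -card_sum -cntJ_typ.
apply: (card_supp_le uC) => k' l; rewrite !inE => /eqP el nz.
by rewrite (key nz) el.
Qed.

End Main.

Unset Implicit Arguments.
Set Strict Implicit.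

Theorem theorem3 (gT : finGroupType) (T : finType) (to : {action gT &-> T})
  (n : nat) (Gs : nat -> {group gT})
  (Rs : forall i : nat, seq (repT (Gs i)))
  (Bs : nat -> 'M[algC]_#|T|) :
  Gs 1%N = 1%G ->
  (forall i, (1 <= i < n)%N -> Gs i \proper Gs i.+1) ->
  (forall i, (1 <= i <= n)%N -> complete_irr_set (Rs i)) ->
  (exists B : 'M[algC]_#|T|, B \in unitmx /\
     forall i, (1 <= i <= n)%N -> sym_adapted to (Rs i) B) ->
  (forall j, (1 <= j <= n)%N -> orbital_sab to Rs j (Bs j)) ->
  Bs 1%N = 1%:M ->
  forall j, (2 <= j <= n)%N ->
  forall kap : {set T} -> 'I_(size (Rs j.-1)) -> nat,
  (forall Y, Y \in orbits to (Gs j) -> is_mult to Y (kap Y)) ->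
  let C := chg (Bs j) (Bs j.-1) in
  [/\ (nu C <= PhiX to (Gs j) kap)%N,
      (forall k, col_nnz C k <= KX to (Gs j) kap)%N &
      (nu C <= KX to (Gs j) kap * #|T|)%N].
Proof.
move=> _ hchain hirrs _ hsab _ j /andP [j2 jn] kap hkap C.
have ej : j = j.-1.+1 by rewrite prednK // (leq_trans _ j2).
have i1 : (1 <= j.-1)%N by rewrite -ltnS -ej.
have i0n : (j.-1 < n)%N by rewrite -ltnS -ej ltnS (leq_trans _ jn).
have hHK : Gs j.-1 \subset Gs j.
  by have := hchain j.-1 (introT andP (conj i1 i0n)); rewrite -ej => /proper_sub.
have [hirr hineq _] := hirrs j.-1 (introT andP (conj i1 (ltnW i0n))).
have j1 : (1 <= j <= n)%N by rewrite jn andbT (leq_trans _ j2).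
have [uBj covj hYj] := hsab j j1.
have [uBp covp hYp] := hsab j.-1 (introT andP (conj i1 (ltnW i0n))).
have ij : (1 <= j.-1 <= j)%N by rewrite i1 leq_pred.
have ii : (1 <= j.-1 <= j.-1)%N by rewrite i1 leqnn.
have [patj hpj] : exists f : {set T} -> seq 'I_(size (Rs j.-1)),
    forall Y, Y \in orbits to (Gs j) ->
    exists e : sumn (map (@rdim _ _ (Rs j.-1)) (f Y)) = size (cols_in (Bs j) Y),
      forall g, g \in Gs j.-1 -> permmx to g *m sub_basis (Bs j) Y =
        sub_basis (Bs j) Y *m castmx (e, e) (bdiag (@rmat _ _ (Rs j.-1) g) (f Y)).
  have hex : forall Y : {set T}, exists s : seq 'I_(size (Rs j.-1)),
      Y \in orbits to (Gs j) ->
      exists e : sumn (map (@rdim _ _ (Rs j.-1)) s) = size (cols_in (Bs j) Y),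
      forall g, g \in Gs j.-1 -> permmx to g *m sub_basis (Bs j) Y =
        sub_basis (Bs j) Y *m castmx (e, e) (bdiag (@rmat _ _ (Rs j.-1) g) s).
    move=> Y; case: (boolP (Y \in orbits to (Gs j))) => oYY; last by exists [::].
    have [_ /(_ _ ij) [s [e he]]] := hYj Y oYY.
    by exists s => _; exists e.
  exists (fun Y => proj1_sig (constructive_indefinite_description _ (hex Y))).
  by move=> Y; exact: (proj2_sig (constructive_indefinite_description _ (hex Y))).
have [patp hpp] : exists f : {set T} -> seq 'I_(size (Rs j.-1)),
    forall Y, Y \in orbits to (Gs j.-1) ->
    exists e : sumn (map (@rdim _ _ (Rs j.-1)) (f Y)) = size (cols_in (Bs j.-1) Y),
      forall g, g \in Gs j.-1 -> permmx to g *m sub_basis (Bs j.-1) Y =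
        sub_basis (Bs j.-1) Y *m castmx (e, e) (bdiag (@rmat _ _ (Rs j.-1) g) (f Y)).
  have hex : forall Y : {set T}, exists s : seq 'I_(size (Rs j.-1)),
      Y \in orbits to (Gs j.-1) ->
      exists e : sumn (map (@rdim _ _ (Rs j.-1)) s) = size (cols_in (Bs j.-1) Y),
      forall g, g \in Gs j.-1 -> permmx to g *m sub_basis (Bs j.-1) Y =
        sub_basis (Bs j.-1) Y *m castmx (e, e) (bdiag (@rmat _ _ (Rs j.-1) g) s).
    move=> Y; case: (boolP (Y \in orbits to (Gs j.-1))) => oYY; last by exists [::].
    have [_ /(_ _ ii) [s [e he]]] := hYp Y oYY.
    by exists s => _; exists e.
  exists (fun Y => proj1_sig (constructive_indefinite_description _ (hex Y))).
  by move=> Y; exact: (proj2_sig (constructive_indefinite_description _ (hex Y))).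
apply: (main3 hHK hirr hineq uBj uBp covj covp _ _ hpj hpp hkap).
- by move=> Y oYY; have [] := hYj Y oYY.
- by move=> Y oYY; have [] := hYp Y oYY.
Qed.
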